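(* Let $c_{\mathrm{TX}}>0$, $\phi>0$, $\theta=\phi/c_{\mathrm{TX}}$, $B\geq1$ an integer, $0<\lambda\leq\lambda_{\mathrm{th}}=\frac{1}{(1+\sqrt{\theta})^2}$, and $$v_{\mathrm{th}}(\lambda,0)=\sqrt{\lambda\theta}+\frac{\lambda}{2}+\sqrt{\lambda}\sqrt{\sqrt{\lambda\theta}+\frac{\lambda}{4}}.$$ For $V_k\in(0,1]$, let $(t^{(MP)}(V_k),S_M^{(MP)}(V_k))$ be the myopic policy in the zero-ambient-noise case, i.e. a (possibly randomized among minimizers) minimizer over $t\in\{0,1,\dots,B\}$, $S_M\geq 0$ of $$\frac{V_k}{1+V_ktS_M}+\lambda t(1+\theta S_M).$$ Then: (i) if $V_k>v_{\mathrm{th}}(\lambda,0)$, then $t^{(MP)}(V_k)=1$ and $S_M^{(MP)}(V_k)=\frac{1}{\sqrt{\lambda\theta}}-\frac{1}{V_k}$; (ii) if $V_k<v_{\mathrm{th}}(\lambda,0)$, then $t^{(MP)}(V_k)=S_M^{(MP)}(V_k)=0$; (iii) if $V_k=v_{\mathrm{th}}(\lambda,0)$, then $t^{(MP)}(V_k)=1$, $S_M^{(MP)}(V_k)=\frac{1}{\sqrt{\lambda\theta}}-\frac{1}{V_k}$ with probability $p_0$, and $t^{(MP)}(V_k)=0$, $S_M^{(MP)}(V_k)=0$ with probability $1-p_0$, for some $p_0\in[0,1]$.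
   Context: This is the coordinated scheme with infinite ambient SNR ($S_A=\infty$): activating $t$ sensors each with local measurement SNR $S_M$ yields aggregate SNR $tS_M$, and the posterior variance given prior variance $V_k$ is $V_k/(1+V_ktS_M)$. Each active sensor costs $c_{\mathrm{TX}}+\phi S_M$; $\lambda$ is a Lagrange multiplier. *)

(* Defs.v *)
From Stdlib Require Import Reals Lra Lia.
Open Scope R_scope.

Definition obj (lam theta V : R) (t : nat) (S : R) : R :=
  V / (1 + V * INR t * S) + lam * INR t * (1 + theta * S).

(* Feasible actions: t in {0,...,B}, S >= 0; by convention S = 0 when no
   sensor is active (t = 0), since S is then irrelevant. *)
Definition feasible (B : nat) (t : nat) (S : R) : Prop :=
  (t <= B)%nat /\ 0 <= S /\ (t = 0%nat -> S = 0).

Definition is_myopic (lam theta : R) (B : nat) (V : R) (t : nat) (S : R) : Prop :=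
  feasible B t S /\
  forall t' S', feasible B t' S' -> obj lam theta V t S <= obj lam theta V t' S'.

Definition lam_th (theta : R) : R := 1 / (1 + sqrt theta) ^ 2.

Definition v_th (lam theta : R) : R :=
  sqrt (lam * theta) + lam / 2 + sqrt lam * sqrt (sqrt (lam * theta) + lam / 4).

(* Main.v *)
Require Import Defs.
From Stdlib Require Import Reals Lra Lia Psatz.
Open Scope R_scope.

Lemma key (V s x : R) : 0 < V -> 0 < s -> 0 <= x ->
  V/(1+V*x) + s*s*x >= 2*s - s*s/V /\
  (V/(1+V*x) + s*s*x <= 2*s - s*s/V -> x = 1/s - 1/V).
Proof.
  intros HV Hs Hx.
  assert (Hy : 0 < 1 + V*x) by nra.
  assert (E : V/(1+V*x) + s*s*x - (2*s - s*s/V) = (V - s*(1+V*x))^2/((1+V*x)*V)).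
  { field; lra. }
  assert (N : 0 <= (V - s*(1+V*x))^2/((1+V*x)*V)).
  { apply Rmult_le_pos. apply pow2_ge_0. left; apply Rinv_0_lt_compat; nra. }
  split. lra.
  intros H.
  assert (Z : (V - s*(1+V*x))^2/((1+V*x)*V) = 0) by lra.
  assert (Z2 : (V - s*(1+V*x))^2 = 0).
  { unfold Rdiv in Z. apply Rmult_integral in Z. destruct Z as [Z|Z]; auto.
    exfalso; assert (0 < / ((1+V*x)*V)) by (apply Rinv_0_lt_compat; nra). lra. }
  assert (Z3 : V = s*(1+V*x)) by (simpl in Z2; rewrite Rmult_1_r in Z2; apply Rmult_integral in Z2; destruct Z2; lra).
  replace (1/s - 1/V) with ((V - s)/(s*V)) by (field; lra).
  apply (Rmult_eq_reg_r (s*V)); [|nra].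
  unfold Rdiv. rewrite Rmult_assoc, Rinv_l by nra. nra.
Qed.

Lemma low (V s x : R) : 0 < V -> 0 < s -> V <= s -> 0 <= x ->
  V/(1+V*x) + s*s*x >= V.
Proof.
  intros HV Hs HVs Hx.
  assert (Hy : 0 < 1 + V*x) by nra.
  assert (E : V/(1+V*x) * (1+V*x) = V) by (field; lra).
  set (z := V/(1+V*x)) in *.
  assert (F : (z - (V - V*V*x))*(1+V*x) = V*V*V*(x*x)).
  { replace ((z - (V - V*V*x))*(1+V*x)) with (z*(1+V*x) - (V - V*V*x)*(1+V*x)) by ring.
    rewrite E. ring. }
  assert (G : 0 <= V*V*V*(x*x)) by (apply Rmult_le_pos; [nra|nra]).
  assert (z >= V - V*V*x).
  { destruct (Rle_or_lt (V - V*V*x) z). lra.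
    assert ((z - (V - V*V*x))*(1+V*x) < 0). apply Rmult_neg_pos; lra. lra. }
  assert (0 <= ((s-V)*(s+V))*x) by (apply Rmult_le_pos; [apply Rmult_le_pos|]; lra).
  nra.
Qed.

Lemma obj_eq lam th V t S s : s*s = lam*th ->
  obj lam th V t S = V/(1+V*(INR t*S)) + s*s*(INR t*S) + lam*INR t.
Proof. intros Hss. unfold obj. rewrite (Rmult_assoc V (INR t) S), Hss. ring. Qed.

Lemma bound1 lam th V t S s : s*s = lam*th -> 0 < V -> 0 < s -> 0 < lam ->
  (1 <= t)%nat -> 0 <= S ->
  obj lam th V t S >= 2*s - s*s/V + lam*INR t /\
  (obj lam th V t S <= 2*s - s*s/V + lam -> t = 1%nat /\ S = 1/s - 1/V).
Proof.
  intros Hss HV Hs Hl Ht HS.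
  assert (Ht1 : 1 <= INR t) by (apply le_INR in Ht; simpl in Ht; lra).
  assert (Hx : 0 <= INR t * S) by nra.
  destruct (key V s (INR t*S) HV Hs Hx) as [K1 K2].
  rewrite (obj_eq lam th V t S s Hss).
  split. lra.
  intros H.
  destruct t as [|[|t]]. lia.
  - split; auto. simpl INR in *. rewrite Rmult_1_l in K2, H. apply K2. lra.
  - exfalso. assert (2 <= INR (Datatypes.S (Datatypes.S t))).
    { replace 2 with (INR 2) by (simpl; ring). apply le_INR. lia. }
    nra.
Qed.

Lemma obj0 lam th V S : obj lam th V 0 S = V.
Proof. unfold obj. simpl INR. replace (1 + V*0*S) with 1 by ring. field. Qed.

Theorem corollary1 (cTX phi : R) (B : nat) (lam V : R) :
  0 < cTX -> 0 < phi -> (1 <= B)%nat ->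
  0 < lam -> lam <= lam_th (phi / cTX) ->
  0 < V -> V <= 1 ->
  (V > v_th lam (phi / cTX) ->
     forall t S, is_myopic lam (phi / cTX) B V t S <->
       (t = 1%nat /\ S = 1 / sqrt (lam * (phi / cTX)) - 1 / V)) /\
  (V < v_th lam (phi / cTX) ->
     forall t S, is_myopic lam (phi / cTX) B V t S <-> (t = 0%nat /\ S = 0)) /\
  (V = v_th lam (phi / cTX) ->
     forall t S, is_myopic lam (phi / cTX) B V t S <->
       ((t = 1%nat /\ S = 1 / sqrt (lam * (phi / cTX)) - 1 / V) \/
        (t = 0%nat /\ S = 0))).
Proof.
  intros Hc Hp HB Hl _ HV _.
  set (th := phi / cTX).
  assert (Hth : 0 < th) by (unfold th; apply Rdiv_lt_0_compat; lra).
  set (s := sqrt (lam * th)).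
  assert (Hs : 0 < s) by (apply sqrt_lt_R0; nra).
  assert (Hss : s * s = lam * th) by (apply sqrt_sqrt; nra).
  set (r := sqrt lam * sqrt (s + lam/4)).
  assert (Hr : 0 <= r) by (apply Rmult_le_pos; apply sqrt_pos).
  assert (Hrr : r * r = lam * (s + lam/4)).
  { unfold r. replace (sqrt lam * sqrt (s + lam / 4) * (sqrt lam * sqrt (s + lam / 4)))
      with ((sqrt lam * sqrt lam) * (sqrt (s + lam/4) * sqrt (s + lam/4))) by ring.
    rewrite !sqrt_sqrt; lra. }
  assert (Hv : v_th lam th = s + lam/2 + r) by reflexivity.
  rewrite Hv.
  set (m := 2*s - s*s/V + lam).
  assert (HVm : V * m = 2*s*V - s*s + lam*V) by (unfold m; field; lra).
  assert (Hq : (V - s - lam/2 - r) * (V - s - lam/2 + r) = V * V - V * m) by nra.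
  assert (Hrl : lam/2 <= r) by nra.
  set (Ss := 1/s - 1/V).
  assert (Hc1 : s < V -> obj lam th V 1 Ss = m).
  { intro. rewrite (obj_eq lam th V 1 Ss s Hss). simpl INR. rewrite Rmult_1_l.
    replace (1 + V*Ss) with (V/s) by (unfold Ss; field; lra).
    unfold Ss, m. field. lra. }
  assert (HSs : s < V -> 0 <= Ss).
  { intro. unfold Ss. assert (/V < /s) by (apply Rinv_lt_contravar; nra).
    unfold Rdiv. lra. }
  assert (Hge : V >= m -> forall t S, feasible B t S -> obj lam th V t S >= m).
  { intros Hm t S [Ht [HS H0]]. destruct t as [|t].
    - rewrite H0 by auto. rewrite obj0. lra.
    - destruct (bound1 lam th V (Datatypes.S t) S s Hss HV Hs Hl ltac:(lia) HS) as [K _].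
      assert (1 <= INR (Datatypes.S t)) by (rewrite S_INR; pose proof (pos_INR t); lra).
      unfold m. nra. }
  assert (Hmin : forall t S, feasible B t S -> (1 <= t)%nat -> obj lam th V t S <= m ->
            t = 1%nat /\ S = Ss).
  { intros t S [Ht [HS H0]] Ht1 Ho. apply (bound1 lam th V t S s Hss HV Hs Hl Ht1 HS). exact Ho. }
  assert (Hf1 : s < V -> feasible B 1 Ss).
  { intro. split; [lia|]. split; [auto|]. discriminate. }
  assert (Hf0 : feasible B 0 0) by (split; [lia|split; [lra|auto]]).
  split; [|split].
  - intros HVt.
    assert (HsV : s < V) by lra.
    assert (Vm : V > m) by nra.
    intros t S; split.
    + intros [Hf Hopt]. specialize (Hopt 1%nat Ss (Hf1 HsV)). rewrite Hc1 in Hopt by auto.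
      destruct t as [|t].
      * destruct Hf as [_ [_ H0]]. rewrite H0 in Hopt by auto. rewrite obj0 in Hopt. lra.
      * apply Hmin; auto. lia.
    + intros [-> ->]. split; [apply Hf1; auto|]. intros t' S' Hf'.
      rewrite Hc1 by auto. apply Rge_le, Hge; auto. lra.
  - intros HVt.
    assert (Hgt : forall t S, feasible B t S -> (1 <= t)%nat -> obj lam th V t S > V).
    { intros t S [Ht [HS H0]] Ht1.
      assert (1 <= INR t) by (apply le_INR in Ht1; simpl in Ht1; lra).
      destruct (Rle_or_lt V s) as [HVs|HVs].
      - rewrite (obj_eq lam th V t S s Hss).
        pose proof (low V s (INR t * S) HV Hs HVs ltac:(nra)). nra.
      - assert (Vm : V < m) by nra.
        destruct (bound1 lam th V t S s Hss HV Hs Hl Ht1 HS) as [K _]. unfold m in *. nra. }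
    intros t S; split.
    + intros [Hf Hopt]. specialize (Hopt 0%nat 0 Hf0). rewrite obj0 in Hopt.
      destruct t as [|t].
      * destruct Hf as [_ [_ H0]]. auto.
      * exfalso. pose proof (Hgt _ _ Hf ltac:(lia)). lra.
    + intros [-> ->]. split; auto. intros t' S' Hf'. rewrite obj0.
      destruct t' as [|t'].
      * destruct Hf' as [_ [_ H0]]. rewrite H0 by auto. rewrite obj0. lra.
      * pose proof (Hgt _ _ Hf' ltac:(lia)). lra.
  - intros HVt.
    assert (HsV : s < V) by lra.
    assert (Vm : V = m) by nra.
    intros t S; split.
    + intros [Hf Hopt]. specialize (Hopt 0%nat 0 Hf0). rewrite obj0 in Hopt.
      destruct t as [|t].
      * right. destruct Hf as [_ [_ H0]]. auto.
      * left. apply Hmin; auto. lia. lra.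
    + intros [[-> ->]|[-> ->]].
      * split; [apply Hf1; auto|]. intros t' S' Hf'.
        rewrite Hc1 by auto. apply Rge_le, Hge; auto. lra.
      * split; auto. intros t' S' Hf'. rewrite obj0.
        rewrite Vm at 1. apply Rge_le, Hge; auto. lra.
Qed.
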